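(* Let $\sigma$ be any one of the DF-QuAD, Quadratic Energy (QE) or Restricted Euler-based (REB) gradual semantics. Then for every acyclic QBAF $\mathcal{Q}=\langle \mathcal{A},\mathcal{R}^-,\mathcal{R}^+,\tau\rangle$, every $\alpha,\beta\in\mathcal{A}$ with $\alpha\neq\beta$ and $\mathcal{R}(\beta)=\{(\beta,\alpha)\}$, and every $\tau':\mathcal{A}\to[0,1]$: (1) if $(\beta,\alpha)\in\mathcal{R}^-$, then $\sigma(\alpha)\le\sigma_{\mathcal{R}\setminus\{(\beta,\alpha)\}}(\alpha)$; (2) if $(\beta,\alpha)\in\mathcal{R}^+$, then $\sigma(\alpha)\ge\sigma_{\mathcal{R}\setminus\{(\beta,\alpha)\}}(\alpha)$; (3) if $(\beta,\alpha)\in\mathcal{R}^-$, $\tau(\beta)\le\tau'(\beta)$ and $\tau(\gamma)=\tau'(\gamma)$ for all $\gamma\in\mathcal{A}\setminus\{\beta\}$, then $\sigma(\alpha)\ge\sigma_{\tau'}(\alpha)$; (4) if $(\beta,\alpha)\in\mathcal{R}^+$, $\tau(\beta)\le\tau'(\beta)$ and $\tau(\gamma)=\tau'(\gamma)$ for all $\gamma\in\mathcal{A}\setminus\{\beta\}$, then $\sigma(\alpha)\le\sigma_{\tau'}(\alpha)$. That is, DF-QuAD, QE and REB satisfy monotonicity on acyclic QBAFs.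
   Context: A QBAF is a quadruple $\mathcal{Q}=\langle\mathcal{A},\mathcal{R}^-,\mathcal{R}^+,\tau\rangle$ with $\mathcal{A}$ a finite set of arguments, $\mathcal{R}^-,\mathcal{R}^+\subseteq\mathcal{A}\times\mathcal{A}$ disjoint attack and support relations, and $\tau:\mathcal{A}\to[0,1]$ a base score function. Write $\mathcal{R}=\mathcal{R}^-\cup\mathcal{R}^+$ and $\mathcal{R}(\beta)=\{(\beta,\gamma)\in\mathcal{R}:\gamma\in\mathcal{A}\}$ for the outgoing edges of $\beta$. A QBAF is acyclic if the directed graph $(\mathcal{A},\mathcal{R})$ has no cycle. For $\mathcal{S}\subseteq\mathcal{R}$, $\mathcal{Q}^{|\mathcal{S}}=\langle\mathcal{A},\mathcal{R}^-\cap\mathcal{S},\mathcal{R}^+\cap\mathcal{S},\tau\rangle$ and $\sigma_{\mathcal{S}}(\alpha)$ is the strength of $\alpha$ in $\mathcal{Q}^{|\mathcal{S}}$; for $\tau':\mathcal{A}\to[0,1]$, $\mathcal{Q}^{|\tau'}=\langle\mathcal{A},\mathcal{R}^-,\mathcal{R}^+,\tau'\rangle$ and $\sigma_{\tau'}(\alpha)$ is the strength of $\alpha$ in $\mathcal{Q}^{|\tau'}$; $\sigma(\alpha)$ is the strength in $\mathcal{Q}$. On an acyclic QBAF the three semantics are defined recursively (following a topological order) as follows. DF-QuAD: with $v_{att}=1-\prod_{(\beta,\alpha)\in\mathcal{R}^-}(1-\sigma(\beta))$ and $v_{sup}=1-\prod_{(\beta,\alpha)\in\mathcal{R}^+}(1-\sigma(\beta))$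 (empty products equal $1$), $\sigma(\alpha)=\tau(\alpha)-\tau(\alpha)(v_{att}-v_{sup})$ if $v_{att}\ge v_{sup}$ and $\sigma(\alpha)=\tau(\alpha)+(1-\tau(\alpha))(v_{sup}-v_{att})$ otherwise. QE: with $E_\alpha=\sum_{(\beta,\alpha)\in\mathcal{R}^+}\sigma(\beta)-\sum_{(\beta,\alpha)\in\mathcal{R}^-}\sigma(\beta)$, $\sigma(\alpha)=\tau(\alpha)-\tau(\alpha)\frac{E_\alpha^2}{1+E_\alpha^2}$ if $E_\alpha\le 0$ and $\sigma(\alpha)=\tau(\alpha)+(1-\tau(\alpha))\frac{E_\alpha^2}{1+E_\alpha^2}$ if $E_\alpha>0$. REB: with the same $E_\alpha$, $\sigma(\alpha)=1-\frac{1-\tau(\alpha)^2}{1+\tau(\alpha)e^{E_\alpha}}$. *)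

(* Defs.v *)
From HB Require Import structures.
From mathcomp Require Import all_boot all_order all_algebra.
From mathcomp Require Import reals sequences exp.
Set Implicit Arguments. Unset Strict Implicit. Unset Printing Implicit Defensive.
Import Order.TTheory GRing.Theory Num.Theory.
Local Open Scope ring_scope.

Inductive semantics := DFQuAD | QE | REB.

Section QBAF.
Variables (R : realType) (A : finType).

(* A QBAF over the finite argument set A is given by an attack relation
   [att], a support relation [sup] (both boolean relations on A, [att b a]
   meaning (b,a) in R^-) and a base score [tau]. *)

Definition disjoint_rels (att sup : rel A) : Prop :=
  forall x y, ~~ (att x y && sup x y).

Definition unit_valued (tau : A -> R) : Prop :=
  forall x, 0 <= tau x <= 1.

Definition edges (att sup : rel A) : rel A := fun x y => att x y || sup x y.

Definition acyclic (att sup : rel A) : Prop :=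
  forall x y, edges att sup x y -> ~~ connect (edges att sup) y x.

Definition update (sem : semantics) (att sup : rel A) (tau : A -> R)
  (s : A -> R) (a : A) : R :=
  match sem with
  | DFQuAD =>
      let vatt := 1 - \prod_(b | att b a) (1 - s b) in
      let vsup := 1 - \prod_(b | sup b a) (1 - s b) in
      if vsup <= vatt then tau a - tau a * (vatt - vsup)
      else tau a + (1 - tau a) * (vsup - vatt)
  | QE =>
      let E := \sum_(b | sup b a) s b - \sum_(b | att b a) s b in
      if E <= 0 then tau a - tau a * (E ^+ 2 / (1 + E ^+ 2))
      else tau a + (1 - tau a) * (E ^+ 2 / (1 + E ^+ 2))
  | REB =>
      let E := \sum_(b | sup b a) s b - \sum_(b | att b a) s b in
      1 - (1 - tau a ^+ 2) / (1 + tau a * expR E)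
  end.

(* Strength on an acyclic QBAF: the recursive definition along a
   topological order is realised by iterating the update #|A| times
   (every argument has depth < #|A| in an acyclic graph, so the values are
   then those of the recursive definition). *)
Definition strength (sem : semantics) (att sup : rel A) (tau : A -> R) : A -> R :=
  iter #|A| (fun s a => update sem att sup tau s a) tau.

Definition remove_edge (r : rel A) (b a : A) : rel A :=
  fun x y => r x y && ((x, y) != (b, a)).

End QBAF.

(* Main.v *)
Require Import Defs.
From HB Require Import structures.
From mathcomp Require Import all_boot all_order all_algebra.
From mathcomp Require Import reals sequences exp.
From mathcomp Require Import lra.
Set Implicit Arguments. Unset Strict Implicit.
Import Order.TTheory GRing.Theory Num.Theory.
Local Open Scope ring_scope.

Module Aux.
Section Ar.
Variable R : realType.
Implicit Types t pa ps sa ss : R.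

Definition dfq t (va vs : R) :=
  if vs <= va then t - t * (va - vs) else t + (1 - t) * (vs - va).
Definition qe t (E : R) :=
  if E <= 0 then t - t * (E ^+ 2 / (1 + E ^+ 2))
  else t + (1 - t) * (E ^+ 2 / (1 + E ^+ 2)).
Definition reb t (E : R) := 1 - (1 - t ^+ 2) / (1 + t * expR E).

Definition F (sem : semantics) t pa ps sa ss :=
  match sem with
  | DFQuAD => dfq t (1 - pa) (1 - ps)
  | QE => qe t (ss - sa)
  | REB => reb t (ss - sa)
  end.

Lemma divle (x1 x2 y1 y2 : R) : 0 <= x2 <= x1 -> 0 < y1 <= y2 -> x2 / y2 <= x1 / y1.
Proof.
move=> /andP[h1 h2] /andP[h3 h4].
have y2p : 0 < y2 by apply: lt_le_trans h4.
rewrite ler_pdivrMr // mulrAC ler_pdivlMr //; nra.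
Qed.

Lemma h_bnd (E : R) : 0 <= E ^+ 2 / (1 + E ^+ 2) <= 1.
Proof.
have e0 : 0 <= E ^+ 2 by rewrite sqr_ge0.
have p : 0 < 1 + E ^+ 2 by lra.
apply/andP; split; first by rewrite divr_ge0 // ltW.
by rewrite ler_pdivrMr //; lra.
Qed.

Lemma h_mono (a b : R) : a ^+ 2 <= b ^+ 2 -> a ^+ 2 / (1 + a ^+ 2) <= b ^+ 2 / (1 + b ^+ 2).
Proof.
move=> h.
have e0 : 0 <= a ^+ 2 by rewrite sqr_ge0.
have p : 0 < 1 + a ^+ 2 by lra.
have p2 : 0 < 1 + b ^+ 2 by lra.
rewrite ler_pdivrMr // mulrAC ler_pdivlMr //; nra.
Qed.

Lemma qe_mono t (E1 E2 : R) : 0 <= t <= 1 -> E1 <= E2 -> qe t E1 <= qe t E2.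
Proof.
move=> /andP[t0 t1] hE; rewrite /qe.
have [b1 b2] := andP (h_bnd E1); have [c1 c2] := andP (h_bnd E2).
case: ifP => h1; case: ifP => h2.
- have : E2 ^+ 2 / (1 + E2 ^+ 2) <= E1 ^+ 2 / (1 + E1 ^+ 2) by apply: h_mono; nra.
  nra.
- nra.
- lra.
- have : E1 ^+ 2 / (1 + E1 ^+ 2) <= E2 ^+ 2 / (1 + E2 ^+ 2).
    apply: h_mono; move/negbT: h1; rewrite -ltNge => h1; nra.
  nra.
Qed.

Lemma dfq_mono t va1 vs1 va2 vs2 : 0 <= t <= 1 -> va2 <= va1 -> vs1 <= vs2 ->
  dfq t va1 vs1 <= dfq t va2 vs2.
Proof.
move=> /andP[t0 t1] ha hs; rewrite /dfq.
case: ifP => h1; case: ifP => h2; try nra.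
Qed.

Lemma reb_mono t (E1 E2 : R) : 0 <= t <= 1 -> E1 <= E2 -> reb t E1 <= reb t E2.
Proof.
move=> /andP[t0 t1] hE; rewrite /reb.
have e1 := expR_gt0 E1; have : expR E1 <= expR E2 by rewrite ler_expR.
move=> e12.
suff : (1 - t ^+ 2) / (1 + t * expR E2) <= (1 - t ^+ 2) / (1 + t * expR E1) by lra.
apply: divle; apply/andP; split; nra.
Qed.

Lemma F_mono sem t pa1 ps1 sa1 ss1 pa2 ps2 sa2 ss2 : 0 <= t <= 1 ->
  pa1 <= pa2 -> ps2 <= ps1 -> sa2 <= sa1 -> ss1 <= ss2 ->
  F sem t pa1 ps1 sa1 ss1 <= F sem t pa2 ps2 sa2 ss2.
Proof.
move=> ht h1 h2 h3 h4; case: sem => /=.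
- apply: dfq_mono => //; lra.
- apply: qe_mono => //; lra.
- apply: reb_mono => //; lra.
Qed.

Lemma F_tau sem t1 t2 pa ps sa ss : 0 <= t1 <= 1 -> 0 <= t2 <= 1 -> t1 <= t2 ->
  0 <= pa <= 1 -> 0 <= ps <= 1 ->
  F sem t1 pa ps sa ss <= F sem t2 pa ps sa ss.
Proof.
move=> /andP[a1 a2] /andP[b1 b2] h /andP[c1 c2] /andP[d1 d2]; case: sem => /=.
- rewrite /dfq; case: ifP => _; nra.
- rewrite /qe; have [e1 e2] := andP (h_bnd (ss - sa)); case: ifP => _; nra.
- rewrite /reb.
  have e := expR_gt0 (ss - sa).
  suff : (1 - t2 ^+ 2) / (1 + t2 * expR (ss - sa)) <= (1 - t1 ^+ 2) / (1 + t1 * expR (ss - sa)) by lra.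
  apply: divle; apply/andP; split; nra.
Qed.

Lemma F_range sem t pa ps sa ss : 0 <= t <= 1 ->
  0 <= pa <= 1 -> 0 <= ps <= 1 -> 0 <= F sem t pa ps sa ss <= 1.
Proof.
move=> /andP[a1 a2] /andP[c1 c2] /andP[d1 d2]; case: sem => /=.
- rewrite /dfq; case: ifP => hh; apply/andP; split; try nra; move/negbT: hh; rewrite -ltNge => hh; nra.
- rewrite /qe; have [e1 e2] := andP (h_bnd (ss - sa)); case: ifP => _; apply/andP; split; nra.
- rewrite /reb.
  have e := expR_gt0 (ss - sa).
  have p : 0 < 1 + t * expR (ss - sa) by nra.
  have q1 : 0 <= (1 - t ^+ 2) / (1 + t * expR (ss - sa)) by rewrite divr_ge0 //; nra.
  have q2 : (1 - t ^+ 2) / (1 + t * expR (ss - sa)) <= 1 by rewrite ler_pdivrMr //; nra.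
  apply/andP; split; lra.
Qed.
End Ar.
Section M.
Variables (R : realType) (A : finType) (sem : semantics).
Implicit Types (att sup : rel A) (tau s : A -> R).

Lemma update_F att sup tau s a : update sem att sup tau s a =
  F sem (tau a) (\prod_(b | att b a) (1 - s b)) (\prod_(b | sup b a) (1 - s b))
    (\sum_(b | att b a) s b) (\sum_(b | sup b a) s b).
Proof. by case: sem. Qed.

Definition unit01 (s : A -> R) := forall x, 0 <= s x <= 1.

Lemma prod01 (P : pred A) s : unit01 s -> 0 <= \prod_(b | P b) (1 - s b) <= 1.
Proof.
move=> hs; apply/andP; split.
  by apply: prodr_ge0 => b _; have := hs b; lra.
by apply: prodr_ile1 => b _; have := hs b; move=> /andP[? ?]; apply/andP; split; lra.
Qed.

Lemma U_range att sup tau s a : unit01 s -> 0 <= tau a <= 1 ->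
  0 <= update sem att sup tau s a <= 1.
Proof. by move=> hs ht; rewrite update_F; apply: F_range => //; apply: prod01. Qed.

Lemma iter_range att sup tau : unit_valued tau -> forall k,
  unit01 (iter k (fun s a => update sem att sup tau s a) tau).
Proof.
move=> ht; elim=> [|k IH] x //=; exact: U_range.
Qed.

Lemma U_loc att sup tau s1 s2 a : (forall b, edges att sup b a -> s1 b = s2 b) ->
  update sem att sup tau s1 a = update sem att sup tau s2 a.
Proof.
move=> h; rewrite !update_F.
rewrite (eq_bigr (fun b => 1 - s2 b) (P := fun b => att b a)); last first.
  by move=> b hb /=; rewrite h // /edges hb.
rewrite (eq_bigr (fun b => 1 - s2 b) (P := fun b => sup b a)); last first.
  by move=> b hb /=; rewrite h // /edges hb orbT.
rewrite (eq_bigr s2 (F1 := s1) (P := fun b => att b a)); last first.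
  by move=> b hb; rewrite h // /edges hb.
rewrite (eq_bigr s2 (F1 := s1) (P := fun b => sup b a)) //.
by move=> b hb /=; rewrite h // /edges hb orbT.
Qed.

Lemma U_rel att1 sup1 att2 sup2 tau s a :
  (forall b, att1 b a = att2 b a) -> (forall b, sup1 b a = sup2 b a) ->
  update sem att1 sup1 tau s a = update sem att2 sup2 tau s a.
Proof.
move=> h1 h2; rewrite !update_F.
by rewrite !(eq_bigl _ _ h1) !(eq_bigl _ _ h2).
Qed.

Lemma U_taueq att sup tau1 tau2 s a : tau1 a = tau2 a ->
  update sem att sup tau1 s a = update sem att sup tau2 s a.
Proof. by move=> h; rewrite !update_F h. Qed.

Lemma iter_cmp att1 sup1 att2 sup2 tau1 tau2 (N : pred A) (beta : A) :
  unit_valued tau1 -> unit_valued tau2 -> beta \in N ->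
  (forall x b, x \in N -> edges att1 sup1 b x -> b \in N) ->
  (forall x b, x \in N -> att1 b x = att2 b x) ->
  (forall x b, x \in N -> sup1 b x = sup2 b x) ->
  (forall x, x \in N -> x != beta -> tau1 x = tau2 x) ->
  tau1 beta <= tau2 beta ->
  (forall x, x \in N -> ~~ edges att1 sup1 beta x) ->
  forall k,
  (forall x, x \in N -> x != beta ->
     iter k (fun s a => update sem att1 sup1 tau1 s a) tau1 x =
     iter k (fun s a => update sem att2 sup2 tau2 s a) tau2 x) /\
  iter k (fun s a => update sem att1 sup1 tau1 s a) tau1 beta <=
  iter k (fun s a => update sem att2 sup2 tau2 s a) tau2 beta.
Proof.
move=> ht1 ht2 bN hN ha hs ht hb hbp; elim=> [|k [IH1 IH2]] /=.
  by split => // x xN xb; apply: ht.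
have loc : forall x, x \in N ->
   update sem att1 sup1 tau1 (iter k (fun s a => update sem att1 sup1 tau1 s a) tau1) x =
   update sem att1 sup1 tau1 (iter k (fun s a => update sem att2 sup2 tau2 s a) tau2) x.
  move=> x xN; apply: U_loc => b hbx; apply: IH1; first exact: hN hbx.
  apply/eqP => eb; move: (hbp x xN); by rewrite -eb hbx.
split.
  move=> x xN xb; rewrite loc // (U_rel _ _ (ha x ^~ xN) (hs x ^~ xN)).
  exact: U_taueq (ht x xN xb).
rewrite loc // (U_rel _ _ (ha beta ^~ bN) (hs beta ^~ bN)) !update_F.
apply: F_tau => //; try apply: prod01; try exact: iter_range.
Qed.


Lemma L_prod (r : rel A) s b0 a : r b0 a ->
  \prod_(b | r b a) (1 - s b) = (1 - s b0) * \prod_(b | r b a && (b != b0)) (1 - s b).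
Proof. by move=> h; rewrite (bigD1 b0). Qed.

Lemma L_sum (r : rel A) s b0 a : r b0 a ->
  \sum_(b | r b a) s b = s b0 + \sum_(b | r b a && (b != b0)) s b.
Proof. by move=> h; rewrite (bigD1 b0). Qed.

Lemma rem_eq (r : rel A) b0 a b : remove_edge r b0 a b a = r b a && (b != b0).
Proof. by rewrite /remove_edge xpair_eqE eqxx andbT. Qed.

Lemma rem_eq0 (r : rel A) b0 a b : ~~ r b0 a -> remove_edge r b0 a b a = r b a.
Proof.
move=> h; rewrite rem_eq; case: eqVneq => [->|]; last by rewrite andbT.
by rewrite andbF (negbTE h).
Qed.

Lemma eq_off (r : rel A) b0 a s1 s2 : ~~ r b0 a -> (forall b, b != b0 -> s1 b = s2 b) ->
  forall b, r b a -> s1 b = s2 b.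
Proof. move=> h e b hb; apply: e; apply/eqP => eb; move: h; by rewrite -eb hb. Qed.

Lemma U_att att sup tau s1 s2 a b0 : att b0 a -> ~~ sup b0 a -> unit01 s1 -> unit01 s2 ->
  0 <= tau a <= 1 -> s1 b0 <= s2 b0 -> (forall b, b != b0 -> s1 b = s2 b) ->
  update sem att sup tau s2 a <= update sem att sup tau s1 a.
Proof.
move=> ha hs u1 u2 ht hb e; rewrite !update_F (L_prod s1 ha) (L_prod s2 ha) (L_sum s1 ha) (L_sum s2 ha).
have e' := eq_off hs e.
rewrite (eq_bigr (fun b => 1 - s1 b) (F1 := fun b => 1 - s2 b) (P := fun b => sup b a)); last by move=> b hb' /=; rewrite e'.
rewrite (eq_bigr s1 (F1 := s2) (P := fun b => sup b a)); last by move=> b hb'; rewrite e'.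
rewrite (eq_bigr (fun b => 1 - s1 b) (F1 := fun b => 1 - s2 b) (P := fun b => att b a && (b != b0))); last first.
  by move=> b /andP[_ hb'] /=; rewrite e.
rewrite (eq_bigr s1 (F1 := s2) (P := fun b => att b a && (b != b0))); last first.
  by move=> b /andP[_ hb']; rewrite e.
have [p0 p1] := andP (prod01 (fun b => att b a && (b != b0)) u1).
have := u1 b0; have := u2 b0.
move=> /andP[? ?] /andP[? ?].
apply: F_mono => //; nra.
Qed.

Lemma U_sup att sup tau s1 s2 a b0 : sup b0 a -> ~~ att b0 a -> unit01 s1 -> unit01 s2 ->
  0 <= tau a <= 1 -> s1 b0 <= s2 b0 -> (forall b, b != b0 -> s1 b = s2 b) ->
  update sem att sup tau s1 a <= update sem att sup tau s2 a.
Proof.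
move=> hs ha u1 u2 ht hb e; rewrite !update_F (L_prod s1 hs) (L_prod s2 hs) (L_sum s1 hs) (L_sum s2 hs).
have e' := eq_off ha e.
rewrite (eq_bigr (fun b => 1 - s1 b) (F1 := fun b => 1 - s2 b) (P := fun b => att b a)); last by move=> b hb' /=; rewrite e'.
rewrite (eq_bigr s1 (F1 := s2) (P := fun b => att b a)); last by move=> b hb'; rewrite e'.
rewrite (eq_bigr (fun b => 1 - s1 b) (F1 := fun b => 1 - s2 b) (P := fun b => sup b a && (b != b0))); last first.
  by move=> b /andP[_ hb'] /=; rewrite e.
rewrite (eq_bigr s1 (F1 := s2) (P := fun b => sup b a && (b != b0))); last first.
  by move=> b /andP[_ hb']; rewrite e.
have [p0 p1] := andP (prod01 (fun b => sup b a && (b != b0)) u1).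
have := u1 b0; have := u2 b0.
move=> /andP[? ?] /andP[? ?].
apply: F_mono => //; nra.
Qed.

Lemma U_rem_att att sup tau s a b0 : att b0 a -> ~~ sup b0 a -> unit01 s ->
  0 <= tau a <= 1 ->
  update sem att sup tau s a <=
  update sem (remove_edge att b0 a) (remove_edge sup b0 a) tau s a.
Proof.
move=> ha hs u ht; rewrite !update_F (L_prod s ha) (L_sum s ha).
rewrite !(eq_bigl _ _ (fun b => rem_eq att b0 a b)) !(eq_bigl _ _ (fun b => rem_eq0 b hs)).
have [p0 p1] := andP (prod01 (fun b => att b a && (b != b0)) u).
have := u b0 => /andP[? ?].
apply: F_mono => //; nra.
Qed.

Lemma U_rem_sup att sup tau s a b0 : sup b0 a -> ~~ att b0 a -> unit01 s ->
  0 <= tau a <= 1 ->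
  update sem (remove_edge att b0 a) (remove_edge sup b0 a) tau s a <=
  update sem att sup tau s a.
Proof.
move=> hs ha u ht; rewrite !update_F (L_prod s hs) (L_sum s hs).
rewrite !(eq_bigl _ _ (fun b => rem_eq sup b0 a b)) !(eq_bigl _ _ (fun b => rem_eq0 b ha)).
have [p0 p1] := andP (prod01 (fun b => sup b a && (b != b0)) u).
have := u b0 => /andP[? ?].
apply: F_mono => //; nra.
Qed.

End M.
End Aux.
Import Aux.

Theorem proposition1 (sem : semantics) (R : realType) (A : finType)
  (att sup : rel A) (tau : A -> R)
  (Hdisj : disjoint_rels att sup) (Htau : unit_valued tau)
  (Hacyc : acyclic att sup)
  (alpha beta : A) (Hab : alpha != beta)
  (Hout : forall g : A, edges att sup beta g = (g == alpha))
  (tau' : A -> R) (Htau' : unit_valued tau') :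
  (att beta alpha ->
     strength sem att sup tau alpha
     <= strength sem (remove_edge att beta alpha) (remove_edge sup beta alpha) tau alpha) /\
  (sup beta alpha ->
     strength sem (remove_edge att beta alpha) (remove_edge sup beta alpha) tau alpha
     <= strength sem att sup tau alpha) /\
  (att beta alpha -> tau beta <= tau' beta ->
     (forall g : A, g != beta -> tau g = tau' g) ->
     strength sem att sup tau' alpha <= strength sem att sup tau alpha) /\
  (sup beta alpha -> tau beta <= tau' beta ->
     (forall g : A, g != beta -> tau g = tau' g) ->
     strength sem att sup tau alpha <= strength sem att sup tau' alpha).
Proof.
have cpos : (0 < #|A|)%N by apply/card_gt0P; exists alpha.
rewrite /strength; move: cpos; case: #|A| => [//|n] _ /=.
set N : pred A := [pred x | ~~ connect (edges att sup) alpha x].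
have eba : edges att sup beta alpha by rewrite Hout.
have bN : beta \in N by exact: Hacyc eba.
have hN : forall x b, x \in N -> edges att sup b x -> b \in N.
  move=> x b; rewrite !inE => xN e; apply: contra xN => cb.
  by apply: connect_trans cb (connect1 e).
have xna : forall x, x \in N -> x != alpha.
  by move=> x; rewrite inE; apply: contra => /eqP ->; exact: connect0.
have hbp : forall x, x \in N -> ~~ edges att sup beta x.
  by move=> x xN; rewrite Hout; exact: xna.
have paN : forall b, edges att sup b alpha -> b \in N by move=> b hb; exact: Hacyc hb.
have remN : forall (r : rel A) x b, x \in N -> r b x = remove_edge r beta alpha b x.
  move=> r x b xN; rewrite /remove_edge xpair_eqE.
  by rewrite (negbTE (xna x xN)) andbF andbT.
have ht0 : forall (t : A -> R) x, unit_valued t -> 0 <= t x <= 1 by move=> t x h; exact: h.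
split; [|split; [|split]].
- move=> hab.
  have nsup : ~~ sup beta alpha by have := Hdisj beta alpha; rewrite hab.
  have [IH1 _] := iter_cmp sem Htau Htau bN hN (remN att) (remN sup)
     (fun x _ _ => erefl (tau x)) (lexx _) hbp n.
  set S1 := iter n _ tau in IH1 *; set S2 := iter n _ tau in IH1 *.
  rewrite [X in _ <= X](@U_loc _ _ sem _ _ tau S2 S1 alpha); last first.
    move=> b; rewrite /edges !rem_eq -andb_orl => /andP[hb nb].
    by rewrite IH1 //; apply: paN.
  apply: U_rem_att => //; exact: iter_range.
- move=> hab.
  have natt : ~~ att beta alpha by have := Hdisj beta alpha; rewrite hab andbT.
  have [IH1 _] := iter_cmp sem Htau Htau bN hN (remN att) (remN sup)
     (fun x _ _ => erefl (tau x)) (lexx _) hbp n.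
  set S1 := iter n _ tau in IH1 *; set S2 := iter n _ tau in IH1 *.
  rewrite [X in X <= _](@U_loc _ _ sem _ _ tau S2 S1 alpha); last first.
    move=> b; rewrite /edges !rem_eq -andb_orl => /andP[hb nb].
    by rewrite IH1 //; apply: paN.
  apply: U_rem_sup => //; exact: iter_range.
- move=> hab hle heq.
  have nsup : ~~ sup beta alpha by have := Hdisj beta alpha; rewrite hab.
  have [IH1 IH2] := iter_cmp sem Htau Htau' bN hN (fun _ _ _ => erefl) (fun _ _ _ => erefl)
     (fun x _ h => heq x h) hle hbp n.
  set S1 := iter n _ tau in IH1 IH2 *; set S2 := iter n _ tau' in IH1 IH2 *.
  rewrite (U_taueq _ _ _ _ (esym (heq alpha Hab))).
  rewrite (@U_loc _ _ sem att sup tau S2 (fun b => if b == beta then S2 b else S1 b) alpha); last first.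
    by move=> b hb; case: eqVneq => // nb; rewrite IH1 //; apply: paN.
  apply: (@U_att _ _ sem att sup tau S1 _ alpha beta) => //; try exact: iter_range.
  + by move=> x; case: eqVneq => _; apply: iter_range.
  + by rewrite eqxx.
  + by move=> b nb; rewrite (negbTE nb).
- move=> hab hle heq.
  have natt : ~~ att beta alpha by have := Hdisj beta alpha; rewrite hab andbT.
  have [IH1 IH2] := iter_cmp sem Htau Htau' bN hN (fun _ _ _ => erefl) (fun _ _ _ => erefl)
     (fun x _ h => heq x h) hle hbp n.
  set S1 := iter n _ tau in IH1 IH2 *; set S2 := iter n _ tau' in IH1 IH2 *.
  rewrite -(U_taueq _ _ _ _ (heq alpha Hab)).
  rewrite [X in _ <= X](@U_loc _ _ sem att sup tau S2 (fun b => if b == beta then S2 b else S1 b) alpha); last first.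
    by move=> b hb; case: eqVneq => // nb; rewrite IH1 //; apply: paN.
  apply: (@U_sup _ _ sem att sup tau S1 _ alpha beta) => //; try exact: iter_range.
  + by move=> x; case: eqVneq => _; apply: iter_range.
  + by rewrite eqxx.
  + by move=> b nb; rewrite (negbTE nb).
Qed.
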